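(* Let $y_1,y_2,y_3>0$ with $y_1=4y_2y_3$, let $g=y_1Q|_{\mathfrak m_1}+y_2Q|_{\mathfrak m_2}+y_3Q|_{\mathfrak m_3}$ with orthonormal basis $X_1,\dots,X_7$, and consider the $\mathrm{SO}(5)$-invariant tensors on $V^{5,2}$ given by $\xi=X_1$, $\eta=X^1$, and the endomorphism $\Phi$ of $\mathfrak m$ with $\Phi X_1=0$, $\Phi X_i=-X_{i+3}$, $\Phi X_{i+3}=X_i$ for $i=2,3,4$. Then $(\eta,\xi,g,\Phi)$, which is a contact metric structure, is a Sasakian structure if and only if $y_1=4y_2^2$ and $y_2=y_3$.
   Context: Basis of $\mathfrak{so}(5)$ (with $E_{ij}$ the elementary $5\times5$ matrices): $e_1=E_{12}-E_{21}$, $e_2=E_{13}-E_{31}$, $e_3=E_{14}-E_{41}$, $e_4=E_{15}-E_{51}$, $e_5=E_{23}-E_{32}$, $e_6=E_{24}-E_{42}$, $e_7=E_{25}-E_{52}$, $e_8=E_{34}-E_{43}$, $e_9=E_{35}-E_{53}$, $e_{10}=E_{54}-E_{45}$; bracket = commutator. $V^{5,2}=\mathrm{SO}(5)/\mathrm{SO}(3)$ with $\mathrm{Lie}(\mathrm{SO}(3))=\mathrm{span}\{e_8,e_9,e_{10}\}$; $\mathfrak m=\mathrm{span}\{e_1,\dots,e_7\}$ is identified with the tangent space at the origin and invariant tensors with $\mathrm{Ad}(\mathrm{SO}(3))$-invariant tensors on $\mathfrak m$. $Q(A,B)=\frac12\mathrm{tr}(AB^T)$; $\mathfrak m_1=\mathrm{span}\{e_1\}$,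 $\mathfrak m_2=\mathrm{span}\{e_2,e_3,e_4\}$, $\mathfrak m_3=\mathrm{span}\{e_5,e_6,e_7\}$, mutually $g$-orthogonal. $X_1=e_1/\sqrt{y_1}$, $X_i=e_i/\sqrt{y_2}$ ($i=2,3,4$), $X_i=e_i/\sqrt{y_3}$ ($i=5,6,7$), with dual coframe $X^i$. A contact metric structure $(\eta,\xi,g,\Phi)$ satisfies $\eta\wedge(d\eta)^3\neq0$, $\eta(\xi)=1$, $\Phi^2=-I+\eta\otimes\xi$, $g(\Phi X,\Phi Y)=g(X,Y)-\eta(X)\eta(Y)$, $d\eta(X,Y)=2g(X,\Phi Y)$. It is Sasakian if it is normal, i.e. the Nijenhuis tensor $N_\Phi(X,Y)=[\Phi X,\Phi Y]+\Phi^2[X,Y]-\Phi[\Phi X,Y]-\Phi[X,\Phi Y]$ satisfies $N_\Phi=-d\eta\otimes\xi$. *)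

(* Defs.v *)
(* Model of the isotropy representation of V^{5,2} = SO(5)/SO(3):
   m = span{e1,...,e7} is identified with 'rV[R]_7 via coordinates in the basis
   e_1..e_7 (index k : 'I_7 stands for e_{k+1}). *)
From HB Require Import structures.
From mathcomp Require Import all_boot all_order all_algebra all_fingroup.
Set Implicit Arguments. Unset Strict Implicit. Unset Printing Implicit Defensive.
Import Order.TTheory GRing.Theory Num.Theory.
Local Open Scope ring_scope.

Section V52.
Variable R : rcfType.

(* e_{k+1} = E_{mrow k, mcol k} - E_{mcol k, mrow k}  (0-based matrix indices) *)
Definition mrow (k : 'I_7) : 'I_5 := inord (nth 0%N [:: 0; 0; 0; 0; 1; 1; 1]%N k).
Definition mcol (k : 'I_7) : 'I_5 := inord (nth 0%N [:: 1; 2; 3; 4; 2; 3; 4]%N k).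

Definition ebas (k : 'I_7) : 'M[R]_5 :=
  delta_mx (mrow k) (mcol k) - delta_mx (mcol k) (mrow k).

Definition emb (u : 'rV[R]_7) : 'M[R]_5 := \sum_(k < 7) u 0 k *: ebas k.

(* m-component (coordinates in e_1..e_7) of a skew matrix in so(5);
   the h = span{e8,e9,e10} part does not touch these entries *)
Definition mcoord (A : 'M[R]_5) : 'rV[R]_7 := \row_k A (mrow k) (mcol k).

Definition brm (u v : 'rV[R]_7) : 'rV[R]_7 :=
  mcoord (emb u *m emb v - emb v *m emb u).

(* weights: g = y1 Q|m1 + y2 Q|m2 + y3 Q|m3 ; Q(e_i,e_j) = delta_ij *)
Definition wt (y1 y2 y3 : R) (k : 'I_7) : R :=
  if (k == 0 :> nat) then y1 else if (k <= 3)%N then y2 else y3.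

Definition gm (y1 y2 y3 : R) (u v : 'rV[R]_7) : R :=
  \sum_(k < 7) wt y1 y2 y3 k * u 0 k * v 0 k.

Definition Xf (y1 y2 y3 : R) (k : 'I_7) : 'rV[R]_7 :=
  (Num.sqrt (wt y1 y2 y3 k))^-1 *: delta_mx 0 k.

Definition Xco (y1 y2 y3 : R) (k : 'I_7) (u : 'rV[R]_7) : R :=
  Num.sqrt (wt y1 y2 y3 k) * u 0 k.

Definition PhiX (y1 y2 y3 : R) (k : 'I_7) : 'rV[R]_7 :=
  if (k == 0 :> nat) then 0
  else if (k <= 3)%N then - Xf y1 y2 y3 (inord (k + 3))
  else Xf y1 y2 y3 (inord (k - 3)).

Definition Phi (y1 y2 y3 : R) (u : 'rV[R]_7) : 'rV[R]_7 :=
  \sum_(k < 7) Xco y1 y2 y3 k u *: PhiX y1 y2 y3 k.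

Definition xi (y1 y2 y3 : R) : 'rV[R]_7 := Xf y1 y2 y3 0.
Definition eta (y1 y2 y3 : R) (u : 'rV[R]_7) : R := Xco y1 y2 y3 0 u.

(* exterior derivative of the invariant 1-form eta at the origin
   (convention d eta(X,Y) = X eta(Y) - Y eta(X) - eta([X,Y])) *)
Definition deta (y1 y2 y3 : R) (u v : 'rV[R]_7) : R := - eta y1 y2 y3 (brm u v).

Definition Nij (y1 y2 y3 : R) (u v : 'rV[R]_7) : 'rV[R]_7 :=
  let P := Phi y1 y2 y3 in
  brm (P u) (P v) + P (P (brm u v)) - P (brm (P u) v) - P (brm u (P v)).

Definition ecan (k : 'I_7) : 'rV[R]_7 := delta_mx 0 k.

(* (eta /\ (d eta)^3)(e_1,...,e_7), up to the nonzero factor 1/(1!2!2!2!) *)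
Definition eta_deta3 (y1 y2 y3 : R) : R :=
  \sum_(s : 'S_7) (-1) ^+ odd_perm s *
    eta y1 y2 y3 (ecan (s (inord 0)))
    * deta y1 y2 y3 (ecan (s (inord 1))) (ecan (s (inord 2)))
    * deta y1 y2 y3 (ecan (s (inord 3))) (ecan (s (inord 4)))
    * deta y1 y2 y3 (ecan (s (inord 5))) (ecan (s (inord 6))).

Definition contact_metric (y1 y2 y3 : R) : Prop :=
  [/\ eta_deta3 y1 y2 y3 != 0,
      eta y1 y2 y3 (xi y1 y2 y3) = 1,
      (forall u, Phi y1 y2 y3 (Phi y1 y2 y3 u) = - u + eta y1 y2 y3 u *: xi y1 y2 y3),
      (forall u v, gm y1 y2 y3 (Phi y1 y2 y3 u) (Phi y1 y2 y3 v)
                   = gm y1 y2 y3 u v - eta y1 y2 y3 u * eta y1 y2 y3 v) &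
      (forall u v, deta y1 y2 y3 u v = 2 * gm y1 y2 y3 u (Phi y1 y2 y3 v))].

Definition normal (y1 y2 y3 : R) : Prop :=
  forall u v, Nij y1 y2 y3 u v = - deta y1 y2 y3 u v *: xi y1 y2 y3.

Definition sasakian (y1 y2 y3 : R) : Prop :=
  contact_metric y1 y2 y3 /\ normal y1 y2 y3.

End V52.

(* Main.v *)
Require Import Defs.
From HB Require Import structures.
From mathcomp Require Import all_boot all_order all_algebra all_fingroup.
From mathcomp Require Import ring lra zify.
Set Implicit Arguments. Unset Strict Implicit. Unset Printing Implicit Defensive.
Import Order.TTheory GRing.Theory Num.Theory.
Local Open Scope ring_scope.

Section Lib.
Variable R : rcfType.
Implicit Types u v : 'rV[R]_7.
Definition mk7 (a0 a1 a2 a3 a4 a5 a6 : R) : 'rV[R]_7 :=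
  \row_(k < 7) nth 0 [:: a0; a1; a2; a3; a4; a5; a6] k.
Definition rw (k : nat) := nth 0%N [:: 0; 0; 0; 0; 1; 1; 1]%N k.
Definition cl (k : nat) := nth 0%N [:: 1; 2; 3; 4; 2; 3; 4]%N k.

Lemma mrowE k : (mrow k : nat) = rw k.
Proof. by rewrite /mrow inordK //; case: k => [[|[|[|[|[|[|[|]]]]]]]]. Qed.
Lemma mcolE k : (mcol k : nat) = cl k.
Proof. by rewrite /mcol inordK //; case: k => [[|[|[|[|[|[|[|]]]]]]]]. Qed.

Lemma embE u (i j : 'I_5) : emb u i j =
  \sum_(k < 7) u 0 k * (((i == rw k :> nat) && (j == cl k :> nat))%:R
                     - ((i == cl k :> nat) && (j == rw k :> nat))%:R).
Proof. rewrite /emb summxE; apply: eq_bigr => k _; rewrite !mxE -mrowE -mcolE //. Qed.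

Definition sk (a0 a1 a2 a3 a4 a5 a6 : R) : 'M[R]_5 :=
  \matrix_(i < 5, j < 5) nth 0 (nth [::] [:: [:: 0; a0; a1; a2; a3];
                                         [:: -a0; 0; a4; a5; a6];
                                         [:: -a1; -a4; 0; 0; 0];
                                         [:: -a2; -a5; 0; 0; 0];
                                         [:: -a3; -a6; 0; 0; 0]] i) j.

Lemma embmk a0 a1 a2 a3 a4 a5 a6 :
  emb (mk7 a0 a1 a2 a3 a4 a5 a6) = sk a0 a1 a2 a3 a4 a5 a6.
Proof.
apply/matrixP => i j; rewrite embE !big_ord_recl big_ord0 !mxE.
Time case: i => [[|[|[|[|[|//]]]]] Hi]; case: j => [[|[|[|[|[|//]]]]] Hj]; rewrite /=; ring.
Qed.
Lemma brmE a0 a1 a2 a3 a4 a5 a6 b0 b1 b2 b3 b4 b5 b6 :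
  brm (mk7 a0 a1 a2 a3 a4 a5 a6) (mk7 b0 b1 b2 b3 b4 b5 b6) =
  mk7 (-(a1*b4 - a4*b1) - (a2*b5 - a5*b2) - (a3*b6 - a6*b3))
      (a0*b4 - a4*b0) (a0*b5 - a5*b0) (a0*b6 - a6*b0)
      (-(a0*b1 - a1*b0)) (-(a0*b2 - a2*b0)) (-(a0*b3 - a3*b0)).
Proof.
rewrite /brm !embmk; apply/rowP => k; rewrite !mxE !big_ord_recl !big_ord0 !mxE !mrowE !mcolE.
Time by case: k => [[|[|[|[|[|[|[|//]]]]]]] Hk]; rewrite /=; ring.
Qed.
Lemma PhiXE (y1 y2 y3 : R) (k j : 'I_7) (i : 'I_1) : (PhiX y1 y2 y3 k) i j =
  if (k == 0 :> nat) then 0 else if (k <= 3)%N then - ((Num.sqrt y3)^-1 * ((j:nat) == (k + 3)%N)%:R)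
  else (Num.sqrt y2)^-1 * ((j:nat) == (k - 3)%N)%:R.
Proof.
case: i => [[|//] Hi]; have := ltn_ord k; rewrite /PhiX; case: ifP => Hk0 Hk7; first by rewrite mxE.
case: ifP => Hk3; rewrite /Xf !mxE /wt inordK; try lia.
- have -> : ((k + 3)%N == 0%N) = false by lia.
  have -> : ((k + 3) <= 3)%N = false by lia.
  by rewrite /= -val_eqE /= inordK; [|lia].
- have -> : ((k - 3)%N == 0%N) = false by lia.
  have -> : ((k - 3) <= 3)%N = true by lia.
  by rewrite /= -val_eqE /= inordK; [|lia].
Qed.
Lemma PhiE (y1 y2 y3 : R) a0 a1 a2 a3 a4 a5 a6 :
  Phi y1 y2 y3 (mk7 a0 a1 a2 a3 a4 a5 a6) =
  mk7 0 (Num.sqrt y3 * a4 / Num.sqrt y2) (Num.sqrt y3 * a5 / Num.sqrt y2) (Num.sqrt y3 * a6 / Num.sqrt y2)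
    (- (Num.sqrt y2 * a1 / Num.sqrt y3)) (- (Num.sqrt y2 * a2 / Num.sqrt y3)) (- (Num.sqrt y2 * a3 / Num.sqrt y3)).
Proof.
apply/rowP => j; rewrite /Phi summxE. under eq_bigr => k _ do rewrite mxE PhiXE. rewrite !big_ord_recl big_ord0 /Xco !mxE /wt.
by case: j => [[|[|[|[|[|[|[|//]]]]]]] Hj]; rewrite /=; ring.
Qed.
Definition o0 : 'I_7 := @Ordinal 7 0 isT.
Definition o1 : 'I_7 := @Ordinal 7 1 isT.
Definition o2 : 'I_7 := @Ordinal 7 2 isT.
Definition o3 : 'I_7 := @Ordinal 7 3 isT.
Definition o4 : 'I_7 := @Ordinal 7 4 isT.
Definition o5 : 'I_7 := @Ordinal 7 5 isT.
Definition o6 : 'I_7 := @Ordinal 7 6 isT.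
Definition pii (a : 'I_7) : 'I_7 := match (a : nat) with 1 => o4 | 2 => o5 | 3 => o6 | 4 => o1 | 5 => o2 | 6 => o3 | _ => o0 end.
Definition sg (a : 'I_7) : R := match (a : nat) with 0 => 0 | 1 | 2 | 3 => 1 | _ => -1 end.
Definition ft (t1 t2 t3 : 'I_7) (i : 'I_7) : 'I_7 := match (i : nat) with 0 => o0 | 1 => t1 | 2 => pii t1 | 3 => t2 | 4 => pii t2 | 5 => t3 | _ => pii t3 end.
Definition ct (t1 t2 t3 : 'I_7) (i : 'I_7) : R := match (i : nat) with 2 => sg t1 | 4 => sg t2 | 6 => sg t3 | _ => 1 end.
Definition VV (f : 'I_7 -> R) := \prod_(i < 7) \prod_(j < 7 | (i < j)%N) (f j - f i).

Lemma l0 : ord0 = o0 :> 'I_7. Proof. exact: val_inj. Qed.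
Lemma l1 : lift ord0 ord0 = o1. Proof. exact: val_inj. Qed.
Lemma l2 : lift ord0 (lift ord0 (ord0)) = o2 :> 'I_7. Proof. exact: val_inj. Qed.
Lemma l3 : lift ord0 (lift ord0 (lift ord0 (ord0))) = o3 :> 'I_7. Proof. exact: val_inj. Qed.
Lemma l4 : lift ord0 (lift ord0 (lift ord0 (lift ord0 (ord0)))) = o4 :> 'I_7. Proof. exact: val_inj. Qed.
Lemma l5 : lift ord0 (lift ord0 (lift ord0 (lift ord0 (lift ord0 (ord0))))) = o5 :> 'I_7. Proof. exact: val_inj. Qed.
Lemma l6 : lift ord0 (lift ord0 (lift ord0 (lift ord0 (lift ord0 (lift ord0 (ord0)))))) = o6 :> 'I_7. Proof. exact: val_inj. Qed.
Ltac lifts := rewrite ?l1 ?l2 ?l3 ?l4 ?l5 ?l6 ?l0.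
Lemma sum7 (F : 'I_7 -> R) : \sum_(t < 7) F t = F o0 + F o1 + F o2 + F o3 + F o4 + F o5 + F o6.
Proof.
rewrite !big_ord_recl big_ord0 addr0 !addrA; lifts. by []. Qed.
Lemma prod7 (F : 'I_7 -> R) : \prod_(t < 7) F t = F o0 * F o1 * F o2 * F o3 * F o4 * F o5 * F o6.
Proof.
rewrite !big_ord_recl big_ord0 mulr1 !mulrA; lifts. by []. Qed.

Lemma VVE (f : 'I_7 -> R) : VV f =
  (f o1 - f o0) * (f o2 - f o0) * (f o3 - f o0) * (f o4 - f o0) * (f o5 - f o0) * (f o6 - f o0) *
  ((f o2 - f o1) * (f o3 - f o1) * (f o4 - f o1) * (f o5 - f o1) * (f o6 - f o1)) *
  ((f o3 - f o2) * (f o4 - f o2) * (f o5 - f o2) * (f o6 - f o2)) *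
  ((f o4 - f o3) * (f o5 - f o3) * (f o6 - f o3)) *
  ((f o5 - f o4) * (f o6 - f o4)) * (f o6 - f o5).
Proof.
rewrite /VV prod7; rewrite !(big_mkcond (fun j : 'I_7 => (_ < j)%N)) !prod7 /=.
rewrite !mul1r !mulr1. by [].
Qed.

Definition term (t1 t2 t3 : 'I_7) := (\prod_(i < 7) ct t1 t2 t3 i) * VV (fun i => (ft t1 t2 t3 i : nat)%:R).
Definition Vid := VV (fun k => (k : nat)%:R).
Definition cls (a : 'I_7) : nat := match (a : nat) with 0 => 0 | 1 | 4 => 1 | 2 | 5 => 2 | _ => 3 end.
Definition good (t1 t2 t3 : 'I_7) : bool :=
  [&& cls t1 != 0%N, cls t2 != 0%N, cls t3 != 0%N, cls t1 != cls t2, cls t1 != cls t3 & cls t2 != cls t3].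
Lemma termE t1 t2 t3 : term t1 t2 t3 = (if good t1 t2 t3 then - Vid else 0).
Proof.
rewrite /term /Vid !VVE prod7.
case: t1 => [[|[|[|[|[|[|[|//]]]]]]] H1]; case: t2 => [[|[|[|[|[|[|[|//]]]]]]] H2];
  case: t3 => [[|[|[|[|[|[|[|//]]]]]]] H3]; rewrite /= /ct /sg /=; ring.
Qed.

Lemma numeric : \sum_(t1 < 7) \sum_(t2 < 7) \sum_(t3 < 7) term t1 t2 t3 = -48 * Vid.
Proof.
under eq_bigr do under eq_bigr do under eq_bigr do rewrite termE.
rewrite !sum7 /good /cls /o0 /o1 /o2 /o3 /o4 /o5 /o6 /=.
ring.
Qed.

Lemma Vid_gt0 : 0 < Vid.
Proof.
rewrite /Vid VVE /=.
by repeat apply: mulr_gt0; rewrite subr_gt0 ltr_nat.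
Qed.

Lemma pickL (a : 'I_7) (F : 'I_7 -> R) : \sum_(t < 7) (a == t)%:R * F t = F a.
Proof.
rewrite (bigD1 a) //= eqxx mul1r big1 ?addr0 // => t /negbTE.
by rewrite eq_sym => ->; rewrite mul0r.
Qed.

Lemma triple (K : R) (X1 X2 X3 : 'I_7 -> R) :
  \sum_(t1 < 7) \sum_(t2 < 7) \sum_(t3 < 7) (K * X1 t1 * X2 t2 * X3 t3) =
  K * (\sum_(t < 7) X1 t) * (\sum_(t < 7) X2 t) * (\sum_(t < 7) X3 t).
Proof.
rewrite [K * _]mulr_sumr !mulr_suml; apply: eq_bigr => t1 _.
rewrite [K * X1 t1 * _]mulr_sumr mulr_suml; apply: eq_bigr => t2 _.
by rewrite mulr_sumr; apply: eq_bigr => t3 _.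
Qed.

Lemma det_sel n (c : 'I_n -> R) (f : 'I_n -> 'I_n) :
  \det (\matrix_(i, k) (c i * (k == f i)%:R)) * \det (Vandermonde n (\row_(k < n) (k : nat)%:R)) =
  (\prod_i c i) * \det (Vandermonde n (\row_(i < n) ((f i : nat)%:R : R))).
Proof.
rewrite -[X in _ * X]det_tr -det_mulmx.
have -> : \matrix_(i, k) (c i * (k == f i)%:R) *m (Vandermonde n (\row_(k < n) (k : nat)%:R))^T =
   diag_mx (\row_i c i) *m (Vandermonde n (\row_(i < n) ((f i : nat)%:R : R)))^T.
  apply/matrixP => i j; rewrite mul_diag_mx !mxE (bigD1 (f i)) //= big1 => [|k /negbTE nk].
    by rewrite !mxE eqxx mulr1 addr0.
  by rewrite !mxE nk mulr0 mul0r.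
rewrite det_mulmx det_diag det_tr; congr (_ * _).
by apply: eq_bigr => i _; rewrite mxE.
Qed.

Definition Dm (t1 t2 t3 : 'I_7) : 'M[R]_7 := \matrix_(i, k) (ct t1 t2 t3 i * (k == ft t1 t2 t3 i)%:R).

Lemma VandE (f : 'I_7 -> R) : \det (Vandermonde 7 (\row_i f i)) = VV f.
Proof.
rewrite det_Vandermonde /VV; apply: eq_bigr => i _; apply: eq_bigr => j _; by rewrite !mxE.
Qed.

Lemma detDm t1 t2 t3 : \det (Dm t1 t2 t3) * Vid = term t1 t2 t3.
Proof. rewrite /term /Vid -!VandE; exact: (det_sel (ct t1 t2 t3) (ft t1 t2 t3)). Qed.

Lemma sumdet : \sum_(t1 < 7) \sum_(t2 < 7) \sum_(t3 < 7) \det (Dm t1 t2 t3) = -48.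
Proof.
have H := numeric.
have Hv : Vid != 0 by rewrite gt_eqF // Vid_gt0.
apply: (mulIf Hv); rewrite -H !mulr_suml; apply: eq_bigr => t1 _.
rewrite !mulr_suml; apply: eq_bigr => t2 _.
rewrite !mulr_suml; apply: eq_bigr => t3 _.
by rewrite detDm.
Qed.
End Lib.

Section Lib2.
Variable R : rcfType.
Implicit Types u v : 'rV[R]_7.

Lemma row7 u : u = mk7 (u 0 o0) (u 0 o1) (u 0 o2) (u 0 o3) (u 0 o4) (u 0 o5) (u 0 o6).
Proof.
apply/rowP => k; rewrite mxE.
by case: k => [[|[|[|[|[|[|[|//]]]]]]] Hk]; rewrite /=; congr (u _ _); apply: val_inj.
Qed.

Lemma etaE (y1 y2 y3 : R) a0 a1 a2 a3 a4 a5 a6 :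
  Defs.eta y1 y2 y3 (mk7 a0 a1 a2 a3 a4 a5 a6) = Num.sqrt y1 * a0.
Proof. by rewrite /Defs.eta /Xco mxE /wt /=. Qed.

Lemma xiE (y1 y2 y3 : R) : xi y1 y2 y3 = mk7 (Num.sqrt y1)^-1 0 0 0 0 0 0.
Proof.
apply/rowP => j; rewrite /xi /Xf !mxE /wt /=.
by case: j => [[|[|[|[|[|[|[|//]]]]]]] Hj]; rewrite /= ?mulr1 ?mulr0.
Qed.

Lemma gmE (y1 y2 y3 : R) a0 a1 a2 a3 a4 a5 a6 b0 b1 b2 b3 b4 b5 b6 :
  gm y1 y2 y3 (mk7 a0 a1 a2 a3 a4 a5 a6) (mk7 b0 b1 b2 b3 b4 b5 b6) =
  y1 * a0 * b0 + y2 * (a1 * b1 + a2 * b2 + a3 * b3) + y3 * (a4 * b4 + a5 * b5 + a6 * b6).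
Proof. rewrite /gm sum7 !mxE /wt /o0 /o1 /o2 /o3 /o4 /o5 /o6 /=; ring. Qed.

Lemma ecan_mk k : ecan R k = mk7 (k == o0)%:R (k == o1)%:R (k == o2)%:R (k == o3)%:R
   (k == o4)%:R (k == o5)%:R (k == o6)%:R.
Proof.
apply/rowP => j; rewrite !mxE.
by case: j => [[|[|[|[|[|[|[|//]]]]]]] Hj]; case: k => [[|[|[|[|[|[|[|//]]]]]]] Hk].
Qed.

Lemma i0 : inord 0 = o0. Proof. by apply: val_inj; rewrite /= inordK. Qed.
Lemma i1 : inord 1 = o1. Proof. by apply: val_inj; rewrite /= inordK. Qed.
Lemma i2 : inord 2 = o2. Proof. by apply: val_inj; rewrite /= inordK. Qed.
Lemma i3 : inord 3 = o3. Proof. by apply: val_inj; rewrite /= inordK. Qed.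
Lemma i4 : inord 4 = o4. Proof. by apply: val_inj; rewrite /= inordK. Qed.
Lemma i5 : inord 5 = o5. Proof. by apply: val_inj; rewrite /= inordK. Qed.
Lemma i6 : inord 6 = o6. Proof. by apply: val_inj; rewrite /= inordK. Qed.

Lemma etaK (y1 y2 y3 : R) k : Defs.eta y1 y2 y3 (ecan R k) = Num.sqrt y1 * (k == o0)%:R.
Proof. by rewrite ecan_mk etaE. Qed.

Lemma detaK (y1 y2 y3 : R) a b :
  deta y1 y2 y3 (ecan R a) (ecan R b) = Num.sqrt y1 * (sg R a * (b == pii a)%:R).
Proof.
rewrite /deta !ecan_mk brmE etaE.
by case: a => [[|[|[|[|[|[|[|//]]]]]]] Ha]; case: b => [[|[|[|[|[|[|[|//]]]]]]] Hb];
  rewrite /= /sg /=; ring.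
Qed.

Lemma exch3 (F : 'I_7 -> 'I_7 -> 'I_7 -> 'S_7 -> R) :
  \sum_(t1 < 7) \sum_(t2 < 7) \sum_(t3 < 7) \sum_(s : 'S_7) F t1 t2 t3 s =
  \sum_(s : 'S_7) \sum_(t1 < 7) \sum_(t2 < 7) \sum_(t3 < 7) F t1 t2 t3 s.
Proof.
under eq_bigr => t1 _ do under eq_bigr => t2 _ do rewrite exchange_big.
under eq_bigr => t1 _ do rewrite exchange_big.
by rewrite exchange_big.
Qed.

Lemma eta_deta3E (y1 y2 y3 : R) : eta_deta3 y1 y2 y3 =
  (Num.sqrt y1) ^+ 4 * (\sum_(t1 < 7) \sum_(t2 < 7) \sum_(t3 < 7) \det (Dm R t1 t2 t3)).
Proof.
rewrite /eta_deta3 i0 i1 i2 i3 i4 i5 i6.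
under eq_bigr => s _ do rewrite etaK !detaK.
rewrite /determinant (exch3 (fun t1 t2 t3 s => (-1) ^+ s * \prod_i Dm R t1 t2 t3 i (s i))).
rewrite mulr_sumr; apply: eq_bigr => s _.
have E : forall t1 t2 t3, (-1) ^+ s * \prod_i Dm R t1 t2 t3 i (s i) =
  ((-1) ^+ s * (s o0 == o0)%:R) * ((s o1 == t1)%:R * (sg R t1 * (s o2 == pii t1)%:R))
  * ((s o3 == t2)%:R * (sg R t2 * (s o4 == pii t2)%:R))
  * ((s o5 == t3)%:R * (sg R t3 * (s o6 == pii t3)%:R)).
  move=> t1 t2 t3; rewrite prod7 !mxE; cbv beta iota delta [ct ft o0 o1 o2 o3 o4 o5 o6 nat_of_ord]; move: ((-1) ^+ s : R) => z; ring.
under eq_bigr => t1 _ do under eq_bigr => t2 _ do under eq_bigr => t3 _ do rewrite E.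
rewrite triple !pickL; move: ((-1) ^+ s : R) => z; ring.
Qed.
End Lib2.

Unset Implicit Arguments.

Theorem theorem2p9 (R : rcfType) (y1 y2 y3 : R) :
  0 < y1 -> 0 < y2 -> 0 < y3 -> y1 = 4 * y2 * y3 ->
  (sasakian y1 y2 y3 <-> (y1 = 4 * y2 ^+ 2 /\ y2 = y3)).
Proof.
move=> h1 h2 h3 hy.
have [p [p0 Hy2 Hp]] : exists p, [/\ 0 < p, y2 = p ^+ 2 & Num.sqrt y2 = p].
  by exists (Num.sqrt y2); rewrite sqrtr_gt0 sqr_sqrtr ?ltW.
have [q [q0 Hy3 Hq]] : exists q, [/\ 0 < q, y3 = q ^+ 2 & Num.sqrt y3 = q].
  by exists (Num.sqrt y3); rewrite sqrtr_gt0 sqr_sqrtr ?ltW.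
have Hr : Num.sqrt y1 = 2 * p * q.
  rewrite hy Hy2 Hy3 (_ : 4 * p ^+ 2 * q ^+ 2 = (2 * p * q) ^+ 2); last by ring.
  by rewrite sqrtr_sqr ger0_norm // !mulr_ge0 // ltW.
subst y1 y2 y3.
have pn : p != 0 by rewrite gt_eqF.
have qn : q != 0 by rewrite gt_eqF.
split.
- case=> _ Hn.
  have := Hn (mk7 1 0 0 0 0 0 0) (mk7 0 1 0 0 0 0 0).
  rewrite /Nij !PhiE !brmE !PhiE ?brmE ?PhiE /deta brmE etaE xiE.
  move/rowP/(_ o4); rewrite !mxE /= Hp Hq Hr.
  move=> E.
  have H : q ^+ 2 - p ^+ 2 = 0.
    match type of E with ?a = ?b => have -> : q ^+ 2 - p ^+ 2 = q ^+ 2 * (a - b) by field; rewrite pn qn end.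
    by rewrite E subrr mulr0.
  move/eqP: H; rewrite subr_eq0 => /eqP H.
  by rewrite H; split; ring.
- case=> _ H.
  have pq : p = q by apply/eqP; rewrite -(@eqrXn2 _ 2) // ?ltW // H.
  subst q.
  split; [split|].
  + rewrite eta_deta3E sumdet Hr; apply: mulf_neq0; last by rewrite oppr_eq0 pnatr_eq0.
    by rewrite expf_neq0 // !mulf_neq0 // pnatr_eq0.
  + rewrite xiE etaE Hr; field; rewrite ?pn ?pnatr_eq0 //=.
  + move=> u; rewrite (row7 u).
    move: (u 0 o0) (u 0 o1) (u 0 o2) (u 0 o3) (u 0 o4) (u 0 o5) (u 0 o6) => a0 a1 a2 a3 a4 a5 a6.
    rewrite !PhiE etaE xiE Hp Hr; apply/rowP => j; rewrite !mxE.
    case: j => [[|[|[|[|[|[|[|//]]]]]]] Hj]; rewrite /=; field; rewrite ?pn ?pnatr_eq0 //=.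
  + move=> u v; rewrite (row7 u) (row7 v).
    move: (u 0 o0) (u 0 o1) (u 0 o2) (u 0 o3) (u 0 o4) (u 0 o5) (u 0 o6) => a0 a1 a2 a3 a4 a5 a6.
    move: (v 0 o0) (v 0 o1) (v 0 o2) (v 0 o3) (v 0 o4) (v 0 o5) (v 0 o6) => b0 b1 b2 b3 b4 b5 b6.
    rewrite !PhiE !gmE !etaE Hp Hr; field; rewrite ?pn ?pnatr_eq0 //=.
  + move=> u v; rewrite (row7 u) (row7 v).
    move: (u 0 o0) (u 0 o1) (u 0 o2) (u 0 o3) (u 0 o4) (u 0 o5) (u 0 o6) => a0 a1 a2 a3 a4 a5 a6.
    move: (v 0 o0) (v 0 o1) (v 0 o2) (v 0 o3) (v 0 o4) (v 0 o5) (v 0 o6) => b0 b1 b2 b3 b4 b5 b6.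
    rewrite /deta brmE etaE !PhiE gmE Hp Hr; field; rewrite ?pn ?pnatr_eq0 //=.
  + move=> u v; rewrite (row7 u) (row7 v).
    move: (u 0 o0) (u 0 o1) (u 0 o2) (u 0 o3) (u 0 o4) (u 0 o5) (u 0 o6) => a0 a1 a2 a3 a4 a5 a6.
    move: (v 0 o0) (v 0 o1) (v 0 o2) (v 0 o3) (v 0 o4) (v 0 o5) (v 0 o6) => b0 b1 b2 b3 b4 b5 b6.
    rewrite /Nij !PhiE !brmE !PhiE ?brmE ?PhiE /deta brmE etaE xiE Hp Hr.
    apply/rowP => j; rewrite !mxE.
    case: j => [[|[|[|[|[|[|[|//]]]]]]] Hj]; rewrite /=; field; rewrite ?pn ?pnatr_eq0 //=.
Qed.
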